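(* Let $p$ be a prime and $G=Z_{p^{\lambda_1}}\times\cdots\times Z_{p^{\lambda_n}}$ with $\lambda_1\le\cdots\le\lambda_n$. For $\mathbf a\in\Lambda(G)$, the subgroup $R(\mathbf a)$ is a characteristic subgroup of $G$ if and only if $\mathbf a$ is canonical.
   Context: Tuples are ordered componentwise. $\Lambda(G)=\{\mathbf a\in\mathbb Z^n:\mathbf 0\le\mathbf a\le(\lambda_1,\dots,\lambda_n)\}$. For $\mathbf a\in\Lambda(G)$, $T(\mathbf a)$ is the set of $(g_1,\dots,g_n)\in G$ with $|g_i|=p^{a_i}$ for all $i$, and $R(\mathbf a)=\bigcup_{\mathbf b\le\mathbf a}T(\mathbf b)$ (a subgroup of $G$). A tuple $\mathbf a$ is canonical if (I) $a_i\ge a_{i-1}$ for all $i\in\{2,\dots,n\}$ and (II) $a_{i+1}-a_i\le\lambda_{i+1}-\lambda_i$ for all $i\in\{1,\dots,n-1\}$. *)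

(* Defs.v *)
From HB Require Import structures.
From mathcomp Require Import all_boot all_order all_algebra all_fingroup.
Set Implicit Arguments. Unset Strict Implicit. Unset Printing Implicit Defensive.

(* The cyclic group Z_{p^k}, represented as 'I_((p^k).-1.+1) with its
   additive (Zp) group structure.  For p prime, (p^k).-1.+1 = p^k. *)
Definition Zpk (p k : nat) : finType := 'I_((p ^ k).-1.+1).

Definition grp (p n : nat) (lam : 'I_n -> nat) : finType :=
  {dffun forall i : 'I_n, 'I_((p ^ lam i).-1.+1)}.

Definition gadd p n (lam : 'I_n -> nat) (g h : grp p lam) : grp p lam :=
  [ffun i => ((g i + h i)%R : 'I_((p ^ lam i).-1.+1))].
Definition gzero p n (lam : 'I_n -> nat) : grp p lam :=
  [ffun i => (0%R : 'I_((p ^ lam i).-1.+1))].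

Definition is_automorphism p n (lam : 'I_n -> nat) (f : grp p lam -> grp p lam) :=
  bijective f /\ forall g h, f (gadd g h) = gadd (f g) (f h).

Definition characteristic_subgroup p n (lam : 'I_n -> nat) (S : grp p lam -> Prop) :=
  [/\ S (gzero p lam),
      (forall g h, S g -> S h -> S (gadd g h)) &
      forall f, is_automorphism f ->
        forall x, S x <-> exists2 y, S y & f y = x].

Definition in_Lambda n (lam a : 'I_n -> nat) := forall i, a i <= lam i.

Definition T_set p n (lam : 'I_n -> nat) (a : 'I_n -> nat) (g : grp p lam) :=
  forall i, #[g i]%g = p ^ a i.

Definition R_set p n (lam : 'I_n -> nat) (a : 'I_n -> nat) (g : grp p lam) :=
  exists b : 'I_n -> nat, [/\ in_Lambda lam b, (forall i, b i <= a i) & T_set b g].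

Definition canonical_tuple n (lam a : 'I_n -> nat) :=
  (forall i j : 'I_n, j = i.+1 :> nat -> a i <= a j) /\
  (forall i j : 'I_n, j = i.+1 :> nat ->
     ((a j)%:Z - (a i)%:Z <= (lam j)%:Z - (lam i)%:Z)%R).

(* Main.v *)
Require Import Defs.
From mathcomp Require Import all_boot all_order all_algebra all_fingroup.
From mathcomp Require Import cyclic.
From mathcomp Require Import zify.
Import GRing.Theory.
Set Implicit Arguments. Unset Strict Implicit. Unset Printing Implicit Defensive.

Lemma ordZ (m : nat) (x : 'I_m.+1) k : (#[x]%g %| k) = (m.+1 %| x * k).
Proof.
rewrite order_dvdn Zp_expg /dvdn.
by rewrite -val_eqE /=.
Qed.

Lemma dvd_mod_pow d m x : d %| m -> (d %| x %% m) = (d %| x).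
Proof. by move=> dm; rewrite /dvdn modn_dvdm. Qed.

Lemma pow_div_shift p l a x : 0 < p -> a <= l ->
  (p ^ l %| x * p ^ a) = (p ^ (l - a) %| x).
Proof.
move=> p0 al; rewrite -{1}(subnK al) expnD dvdn_pmul2r //.
by rewrite expn_gt0 p0.
Qed.

Lemma Mp p l : prime p -> (p ^ l).-1.+1 = p ^ l.
Proof. by move=> pp; rewrite prednK // expn_gt0 prime_gt0. Qed.

Lemma ord_dvd_iff p l (x : 'I_((p ^ l).-1.+1)) k : prime p -> k <= l ->
  (#[x]%g %| p ^ k) = (p ^ (l - k) %| x).
Proof.
move=> pp kl; rewrite ordZ [X in X %| _]Mp // pow_div_shift // prime_gt0 //.
Qed.

Lemma R_iff p n (lam a : 'I_n -> nat) (g : grp p lam) : prime p -> in_Lambda lam a ->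
  R_set a g <-> forall i, p ^ (lam i - a i) %| g i.
Proof.
move=> pp La; split.
  move=> [b [Lb ba Tb]] i.
  rewrite -ord_dvd_iff // Tb; exact: dvdn_exp2l.
move=> H; exists (fun i => logn p #[g i]%g).
have E i : exists2 m, m <= a i & #[g i]%g = p ^ m.
  by apply/dvdn_pfactor => //; rewrite ord_dvd_iff.
split.
- move=> i; case: (E i) => m mi ->; rewrite pfactorK //; exact: leq_trans (La i).
- by move=> i; case: (E i) => m mi ->; rewrite pfactorK.
- by move=> i; case: (E i) => m mi ->; rewrite pfactorK.
Qed.

Definition Rb p n (lam a : 'I_n -> nat) (g : grp p lam) :=
  forall i, p ^ (lam i - a i) %| g i.

Definition gmul p n (lam : 'I_n -> nat) (k : nat) (h : grp p lam) : grp p lam :=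
  [ffun i => ((h i *+ k)%R : 'I_((p ^ lam i).-1.+1))].

Definition ev p n (lam : 'I_n -> nat) (j x : nat) : grp p lam :=
  [ffun i => ((if val i == j then inZp x else 0%R) : 'I_((p ^ lam i).-1.+1))].

Definition tr p n (lam : 'I_n -> nat) (k : nat) (g : grp p lam) : grp p lam :=
  [ffun i => ((if val i < k then 0%R else g i) : 'I_((p ^ lam i).-1.+1))].

Definition additive_g p n (lam : 'I_n -> nat) (f : grp p lam -> grp p lam) :=
  forall g h, f (gadd g h) = gadd (f g) (f h).

Lemma Rb0 p n (lam a : 'I_n -> nat) : Rb a (gzero p lam).
Proof. by move=> i; rewrite ffunE /= dvdn0. Qed.

Lemma RbD p n (lam a : 'I_n -> nat) (g h : grp p lam) : prime p ->
  Rb a g -> Rb a h -> Rb a (gadd g h).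
Proof.
move=> pp Rg Rh i; rewrite ffunE /=.
rewrite dvd_mod_pow; first exact: dvdn_add.
by rewrite Mp // dvdn_exp2l // leq_subr.
Qed.

Lemma f0 p n (lam : 'I_n -> nat) f : @additive_g p n lam f -> f (gzero p lam) = gzero p lam.
Proof.
move=> hf; have E : gadd (gzero p lam) (gzero p lam) = gzero p lam.
  by apply/ffunP => i; rewrite !ffunE addr0.
have := hf (gzero p lam) (gzero p lam); rewrite E => H.
apply/ffunP => i; have := congr1 (fun g : grp p lam => g i) H.
rewrite !ffunE /= => Hi.
by apply: (@addrI _ (f (gzero p lam) i)); rewrite addr0 -Hi.
Qed.

Lemma fmul p n (lam : 'I_n -> nat) f k h : @additive_g p n lam f -> f (gmul k h) = gmul k (f h).
Proof.
move=> hf; elim: k => [|k IH].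
  have -> : gmul 0 h = gzero p lam by apply/ffunP => i; rewrite !ffunE.
  rewrite f0 //; by apply/ffunP => i; rewrite !ffunE.
have E : forall g : grp p lam, gmul k.+1 g = gadd g (gmul k g).
  by move=> g; apply/ffunP => i; rewrite !ffunE mulrS.
by rewrite !E hf IH.
Qed.

Lemma ev_mul p n (lam : 'I_n -> nat) j x : ev p lam j x = gmul x (ev p lam j 1).
Proof.
apply/ffunP => i; rewrite !ffunE; case: (val i == j); last by rewrite mul0rn.
by rewrite Zp_mulrn; apply/val_inj; rewrite /= modnMml mul1n.
Qed.

Lemma tr0 p n (lam : 'I_n -> nat) (g : grp p lam) : tr 0 g = g.
Proof. by apply/ffunP => i; rewrite ffunE. Qed.

Lemma trn p n (lam : 'I_n -> nat) (g : grp p lam) : tr n g = gzero p lam.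
Proof. by apply/ffunP => i; rewrite !ffunE ltn_ord. Qed.

Lemma trS p n (lam : 'I_n -> nat) (g : grp p lam) (k : 'I_n) :
  tr k g = gadd (tr k.+1 g) (ev p lam k (g k)).
Proof.
apply/ffunP => i; rewrite !ffunE.
case: (eqVneq (val i) (val k)) => [E|N].
  have E' : i = k by apply/val_inj.
  subst i; rewrite ltnn ltnSn add0r valZpK //.
rewrite addr0; case: ltngtP N => // H _.
  by rewrite ltnS (ltnW H).
by rewrite ltnS leqNgt H.
Qed.

Lemma nat_key p lj li cj ci h : prime p -> p ^ lj %| h * p ^ li ->
  cj <= ci + (lj - li) -> p ^ cj %| h * p ^ ci.
Proof.
move=> pp H c.
have p0 : 0 < p by exact: prime_gt0.
case: (leqP lj li) => l.
  have c' : cj <= ci by lia.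
  apply: dvdn_mull; exact: dvdn_exp2l.
have : p ^ (lj - li) %| h.
  by rewrite -(@dvdn_pmul2r (p ^ li)) ?expn_gt0 ?p0 // -expnD subnK // ltnW.
move=> /dvdnP [t ->].
apply: (@dvdn_trans (p ^ (ci + (lj - li)))); first exact: dvdn_exp2l.
by rewrite expnD -mulnA mulnC dvdn_mull // dvdn_mulr.
Qed.

Lemma ev_R p n (lam a : 'I_n -> nat) f (k : 'I_n) x : prime p -> @additive_g p n lam f ->
  (forall i j : 'I_n, lam j - a j <= (lam i - a i) + (lam j - lam i)) ->
  p ^ (lam k - a k) %| x -> Rb a (f (ev p lam k x)).
Proof.
move=> pp hf pair dx.
rewrite ev_mul fmul //.
set h := f (ev p lam k 1).
have hz : gmul (p ^ lam k) (ev p lam k 1) = gzero p lam.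
  apply/ffunP => i; rewrite !ffunE.
  case: (eqVneq (val i) (val k)) => [E|N]; last by rewrite mul0rn.
  have E' : i = k by apply/val_inj.
  subst i; rewrite Zp_mulrn; apply/val_inj => /=.
  by rewrite Mp // modnMml mul1n modnn.
have hz' : gmul (p ^ lam k) h = gzero p lam by rewrite /h -fmul // hz f0.
move=> j; rewrite ffunE Zp_mulrn /=.
have Hj := congr1 (fun g : grp p lam => val (g j)) hz'.
rewrite /= !ffunE /= Zp_mulrn /= in Hj.
rewrite [X in _ %% X]Mp // in Hj.
rewrite [X in _ %% X]Mp // dvd_mod_pow ?dvdn_exp2l ?leq_subr //.
move/dvdnP: dx => [t ->].
rewrite mulnCA; apply: dvdn_mull.
apply: (nat_key pp _ (pair k j)).
by rewrite /dvdn Hj.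
Qed.

Lemma add_R p n (lam a : 'I_n -> nat) f (g : grp p lam) : prime p -> @additive_g p n lam f ->
  (forall i j : 'I_n, lam j - a j <= (lam i - a i) + (lam j - lam i)) ->
  Rb a g -> Rb a (f g).
Proof.
move=> pp hf pair Rg.
suff H : forall d, d <= n -> Rb a (f (tr (n - d) g)).
  by have := H n (leqnn n); rewrite subnn tr0.
elim => [|d IH] dn.
  by rewrite subn0 trn f0 //; exact: Rb0.
have kn : n - d.+1 < n by lia.
have -> : n - d.+1 = val (Ordinal kn) by [].
rewrite trS hf; apply: RbD => //.
  have -> : (Ordinal kn).+1 = n - d by rewrite /=; lia.
  by apply: IH; lia.
by apply: ev_R.
Qed.

Lemma tele n (lam a : 'I_n -> nat) : canonical_tuple lam a ->
  forall d (i j : 'I_n), val j = val i + d -> a i <= a j /\ a j + lam i <= a i + lam j.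
Proof.
move=> [c1 c2]; elim => [|d IH] i j E; [have Ej : nat_of_ord j = nat_of_ord i + 0 := E|have Ej : nat_of_ord j = nat_of_ord i + d.+1 := E].
  have -> : j = i by apply/val_inj; rewrite E addn0.
  by split.
have kn : nat_of_ord i + d.+1 < n by have := ltn_ord j; lia.
have kn' : nat_of_ord i + d < n by lia.
have := IH i (Ordinal kn') erefl.
have E2 : nat_of_ord j = (Ordinal kn').+1 by rewrite /=; lia.
have := c1 _ _ E2; have := c2 _ _ E2.
move=> /= H1 H2 [H3 H4]; split; first exact: leq_trans H2.
lia.
Qed.

Lemma pair_cond n (lam a : 'I_n -> nat) :
  (forall i j : 'I_n, i <= j -> lam i <= lam j) -> in_Lambda lam a ->
  canonical_tuple lam a ->
  forall i j : 'I_n, lam j - a j <= (lam i - a i) + (lam j - lam i).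
Proof.
move=> srt La C i j.
have Li := La i; have Lj := La j.
case: (leqP i j) => ij.
  have [H1 H2] := @tele n lam a C (j - i) i j (esym (subnKC ij)).
  have := srt i j ij; lia.
have [H1 H2] := @tele n lam a C (i - j) j i (esym (subnKC (ltnW ij))).
have := srt j i (ltnW ij); lia.
Qed.

Lemma if_dir p n (lam a : 'I_n -> nat) : prime p ->
  (forall i j : 'I_n, i <= j -> lam i <= lam j) -> in_Lambda lam a ->
  canonical_tuple lam a -> characteristic_subgroup (R_set (p := p) (lam := lam) a).
Proof.
move=> pp srt La C.
have pair := pair_cond srt La C.
have RI := fun g => @R_iff p n lam a g pp La.
split.
- by apply/RI; exact: Rb0.
- by move=> g h /RI Rg /RI Rh; apply/RI; apply: RbD.
move=> f [[g fK gK] hf] x; split.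
  move=> Rx; exists (g x); last by rewrite gK.
  have hg : additive_g g.
    by move=> u v; rewrite -{1}(gK u) -{1}(gK v) -hf fK.
  by apply/RI; apply: add_R => //; apply/RI.
by move=> [y /RI Ry <-]; apply/RI; apply: add_R.
Qed.

Definition tv p n (lam : 'I_n -> nat) (s t : 'I_n) (u : nat) (g : grp p lam) : grp p lam :=
  [ffun k => ((if k == t then (g k + inZp (u * g s))%R else g k) : 'I_((p ^ lam k).-1.+1))].
Definition tvN p n (lam : 'I_n -> nat) (s t : 'I_n) (u : nat) (g : grp p lam) : grp p lam :=
  [ffun k => ((if k == t then (g k - inZp (u * g s))%R else g k) : 'I_((p ^ lam k).-1.+1))].

Lemma inZpD m a b : inZp (a + b) = (inZp a + inZp b :> 'I_m.+1)%R.
Proof. by apply/val_inj; rewrite /= modnDm. Qed.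

Lemma modshift m Ms u x y : m.+1 %| u * Ms ->
  inZp (u * ((x + y) %% Ms)) = inZp (u * x + u * y) :> 'I_m.+1.
Proof.
move=> H; apply/val_inj => /=.
have E : u * (x + y) = (x + y) %/ Ms * ((u * Ms) %/ m.+1) * m.+1 + u * ((x + y) %% Ms).
  rewrite -mulnA divnK // {1}(divn_eq (x + y) Ms) mulnDr.
  by rewrite mulnCA.
by rewrite -mulnDr E modnMDl.
Qed.

Lemma tv_add p n (lam : 'I_n -> nat) s t u : s != t ->
  (p ^ lam t).-1.+1 %| u * (p ^ lam s).-1.+1 ->
  additive_g (@tv p n lam s t u).
Proof.
move=> st H g h; apply/ffunP => k; rewrite !ffunE.
case: (eqVneq k t) => [E|//]; subst k.
rewrite /= modshift // inZpD.
by rewrite addrACA.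
Qed.

Lemma tv_bij p n (lam : 'I_n -> nat) s t u : s != t -> bijective (@tv p n lam s t u).
Proof.
move=> st; exists (@tvN p n lam s t u) => g; apply/ffunP => k; rewrite !ffunE.
  case: (eqVneq k t) => [E|//]; subst k.
  by rewrite (negbTE st) addrK.
case: (eqVneq k t) => [E|//]; subst k.
by rewrite (negbTE st) subrK.
Qed.

Lemma ev_Rb p n (lam a : 'I_n -> nat) (s : 'I_n) : prime p ->
  Rb a (ev p lam s (p ^ (lam s - a s))).
Proof.
move=> pp k; rewrite ffunE.
case: (eqVneq (val k) (val s)) => [E|N]; last by rewrite /= dvdn0.
have E' : k = s by apply/val_inj.
subst k => /=.
by rewrite dvd_mod_pow // Mp // dvdn_exp2l // leq_subr.
Qed.

Lemma char_use p n (lam a : 'I_n -> nat) (s t : 'I_n) u : prime p -> in_Lambda lam a ->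
  characteristic_subgroup (R_set (p := p) (lam := lam) a) -> s != t ->
  p ^ lam t %| u * p ^ lam s ->
  p ^ (lam t - a t) %| (u * (p ^ (lam s - a s) %% p ^ lam s)) %% p ^ lam t.
Proof.
move=> pp La [_ _ H] st D.
have RI := fun g => @R_iff p n lam a g pp La.
have aut : is_automorphism (@tv p n lam s t u).
  split; first exact: tv_bij.
  by apply: tv_add => //; rewrite !Mp.
set y := ev p lam s (p ^ (lam s - a s)).
have Ry : R_set a y by apply/RI; exact: ev_Rb.
have : R_set a (tv s t u y) by apply/(H _ aut); exists y.
move/RI => /(_ t); rewrite ffunE eqxx /= !ffunE (eq_sym (val t)).
have -> : (val s == val t) = false by apply/negbTE.
rewrite eqxx add0n /= modn_mod !Mp //.
Qed.

Lemma only_if_dir p n (lam a : 'I_n -> nat) : prime p ->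
  (forall i j : 'I_n, i <= j -> lam i <= lam j) -> in_Lambda lam a ->
  characteristic_subgroup (R_set (p := p) (lam := lam) a) -> canonical_tuple lam a.
Proof.
move=> pp srt La CH.
have p1 := prime_gt1 pp.
split=> i j E.
  have ij : nat_of_ord i <= j by rewrite E.
  have st : i != j by apply/eqP => Eij; move: E; rewrite Eij; lia.
  have Li := srt i j ij; have Hai := La i; have Haj := La j.
  have D := char_use (u := p ^ (lam j - lam i)) pp La CH st
    ltac:(by rewrite -expnD subnK).
  case: (leqP (a i) (a j)) => // ji.
  rewrite (modn_small (m := p ^ (lam i - a i))) in D; last by rewrite ltn_exp2l //; lia.
  rewrite -expnD in D.
  have e : lam j - lam i + (lam i - a i) = lam j - a i by lia.
  rewrite e modn_small in D; last by rewrite ltn_exp2l //; lia.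
  rewrite dvdn_Pexp2l // in D; lia.
have ij : nat_of_ord i <= j by rewrite E.
have ts : j != i by apply/eqP => Eij; move: E; rewrite Eij; lia.
have Li := srt i j ij; have Hai := La i; have Haj := La j.
have D := char_use (u := 1) pp La CH ts ltac:(by rewrite mul1n dvdn_exp2l).
suff : a j + lam i <= a i + lam j by lia.
case: (leqP (a j + lam i) (a i + lam j)) => // ji.
rewrite mul1n (modn_small (m := p ^ (lam j - a j))) in D; last by rewrite ltn_exp2l //; lia.
rewrite modn_small in D; last by rewrite ltn_exp2l //; lia.
rewrite dvdn_Pexp2l // in D; lia.
Qed.

Unset Implicit Arguments.

Theorem mainTheorem3 (p n : nat) (lam : 'I_n -> nat) (a : 'I_n -> nat) :
  prime p ->
  (forall i j : 'I_n, i <= j -> lam i <= lam j) ->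
  in_Lambda lam a ->
  (characteristic_subgroup (R_set (p := p) (lam := lam) a) <-> canonical_tuple lam a).
Proof.
move=> pp srt La; split.
  exact: only_if_dir.
exact: if_dir.
Qed.
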